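(* Let $n>d\geq 1$ and let $\Phi$ be a real, additive gain graph on vertex set $V=\{1,\dots,n\}$ with edge set $E$. Then there is an open dense subset $\mathcal{G}\subseteq(\mathbb{E}^d)^n$ of $n$-tuples of distinct points such that for every $\mathbf{Q}=(Q_1,\dots,Q_n)\in\mathcal{G}$, writing $\mathcal{H}=\mathcal{H}(\Phi;\mathbf{Q})$, the following hold. (a) For every edge set $S\subseteq E$, writing $c(S)=n-m$, the intersection $\bigcap_{e\in S}h(e)$ is empty if $S$ is unbalanced or if $m>d$; otherwise it is a nonempty affine flat of dimension $d-m$. (b) For edge sets $S_1,S_2\subseteq E$, the intersections $\bigcap_{e\in S_1}h(e)$ and $\bigcap_{e\in S_2}h(e)$ are equal and nonempty if and only if $S_1\cup S_2$ is balanced and the connected components of $(V,S_1)$ and of $(V,S_2)$ partition $V$ in the same way, into at least $n-d$ parts.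
   Context: $\mathbb{E}^d$ is Euclidean $d$-space with distance $d(\cdot,\cdot)$. For points $Q_i,Q_j$ the Pythagorean coordinate of a point $P$ is $\psi_{ij}(P)=d(P,Q_i)^2-d(P,Q_j)^2$; if $Q_i\neq Q_j$, each level set $\{\psi_{ij}=c\}$ is a hyperplane perpendicular to the line $Q_iQ_j$. A real, additive gain graph $\Phi$ on vertex set $V=\{1,\dots,n\}$ consists of a finite graph with edge set $E$ (multiple edges allowed; every edge has two distinct endpoints) together with a gain function assigning to each edge $e$ with endpoints $i,j$ a real number $\phi(e;i,j)$, where $\phi(e;j,i)=-\phi(e;i,j)$. An edge set $S\subseteq E$ is balanced if for every circle (simple closed path) contained in $S$ the sum of the gains of its edges, read in a consistent direction around the circle, is $0$. $c(S)$ denotes the number of connected components of the spanning subgraph $(V,S)$, isolated vertices counting as components. For $\mathbf{Q}=(Q_1,\dots,Q_n)\in(\mathbb{E}^d)^n$ with $Q_i\neq Q_j$ whenever $i,j$ are adjacent, the Pythagorean arrangement $\mathcal{H}(\Phi;\mathbf{Q})$ consists of the hyperplanes $h(e)=\{P\in\mathbb{E}^d:\psi_{ij}(P)=\phi(e;i,j)\}$, one for each edge $e$ with endpoints $i,j$. The intersection over the empty edge set is $\mathbb{E}^d$. *)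

(* Defs.v *)
From HB Require Import structures.
From mathcomp Require Import all_boot all_order all_algebra.
From mathcomp Require Import all_classical all_reals all_analysis.
Set Implicit Arguments. Unset Strict Implicit. Unset Printing Implicit Defensive.
Import Order.TTheory GRing.Theory Num.Theory.
Import numFieldNormedType.Exports.
Local Open Scope ring_scope.

(* Euclidean d-space is modelled as row vectors 'rV[R]_d over a realType R;
   an n-tuple of points (Q_1,...,Q_n) is an n x d matrix whose i-th row is Q_i.
   The gain graph: finite edge type E, endpoints src e, tgt e (distinct),
   gain phi e = phi(e; src e, tgt e), so phi(e; tgt e, src e) = - phi e. *)

Section GainGraph.
Variables (R : realType) (n d : nat) (E : finType).
Variables (src tgt : E -> 'I_n) (phi : E -> R).

Definition sqdist (P Q : 'rV[R]_d) : R := \sum_(k < d) (P 0 k - Q 0 k) ^+ 2.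

Definition pyth (Qi Qj P : 'rV[R]_d) : R := sqdist P Qi - sqdist P Qj.

Definition joins (e : E) (i j : 'I_n) : bool :=
  ((src e == i) && (tgt e == j)) || ((src e == j) && (tgt e == i)).

(* gain phi(e; i, j) of e read from i to j (meaningful when joins e i j) *)
Definition ogain (e : E) (i j : 'I_n) : R :=
  if (src e == i) && (tgt e == j) then phi e else - phi e.

Definition is_circle (S : {set E}) (k : nat)
    (vs : 'I_k.+1 -> 'I_n) (es : 'I_k.+1 -> E) : Prop :=
  [/\ injective vs, injective es, forall t, es t \in S &
      forall t, joins (es t) (vs t) (vs (ordS t))].

Definition balanced (S : {set E}) : Prop :=
  forall (k : nat) (vs : 'I_k.+1 -> 'I_n) (es : 'I_k.+1 -> E),
    is_circle S vs es ->
    \sum_(t < k.+1) ogain (es t) (vs t) (vs (ordS t)) = 0.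

Definition adj (S : {set E}) : rel 'I_n :=
  fun i j => [exists e, (e \in S) && joins e i j].

(* connected components of (V, S) (isolated vertices are components) *)
Definition components (S : {set E}) : {set {set 'I_n}} :=
  [set [set j | connect (adj S) i j] | i : 'I_n].

Definition ncomp (S : {set E}) : nat := #|components S|.

Local Open Scope classical_set_scope.

Definition hyp (Q : 'M[R]_(n, d)) (e : E) : set 'rV[R]_d :=
  [set P | pyth (row (src e) Q) (row (tgt e) Q) P = phi e].

(* intersection of h(e) over e in S (= whole space when S is empty) *)
Definition flatI (Q : 'M[R]_(n, d)) (S : {set E}) : set 'rV[R]_d :=
  [set P | forall e, e \in S -> hyp Q e P].

Definition affine_flat (A : set 'rV[R]_d) (k : nat) : Prop :=
  exists (P0 : 'rV[R]_d) (U : 'M[R]_d),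
    \rank U = k /\ A = [set P | (P - P0 <= U)%MS].

End GainGraph.

(* Main.v *)
Require Import Defs.
From HB Require Import structures.
From mathcomp Require Import all_boot all_order all_algebra.
From mathcomp Require Import all_classical all_reals all_analysis.
From mathcomp Require Import zify ring lra.
Import Order.TTheory GRing.Theory Num.Theory.
Import numFieldNormedType.Exports.
Local Open Scope classical_set_scope.
Local Open Scope ring_scope.
Set Implicit Arguments. Unset Strict Implicit.

Section Topo.
Variables (R : realType) (n d : nat).
Notation MT := 'M[R]_(n, d).

Definition lpoly (f : MT -> R) :=
  forall A B : MT, exists p : {poly R}, forall t, f (A + t *: B) = p.[t].

Definition good (f : MT -> R) := continuous f /\ lpoly f.

Lemma open_nz (f : MT -> R) : continuous f -> open [set Q | f Q != 0].
Proof.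
move=> cf; have -> : [set Q | f Q != 0] = f @^-1` [set x | x != 0] by [].
apply: open_comp; last exact: open_neq.
by move=> x _; apply: cf.
Qed.

Lemma dense_nz (f : MT -> R) : lpoly f -> (exists Q0, f Q0 != 0) ->
  dense [set Q | f Q != 0].
Proof.
move=> lp [Q0 fQ0] O [Q OQ] oO.
have : nbhs Q O by move: oO; rewrite openE => /(_ Q OQ).
move=> /nbhs_ballP [e e0 eO].
have [p Hp] := lp Q (Q0 - Q).
have p1 : p.[1] != 0 by rewrite -Hp scale1r addrC subrK.
have pn0 : p != 0 by apply: contraNneq p1 => ->; rewrite horner0.
set c := e / (`|Q0 - Q| + 1).
have c0 : 0 < c by rewrite divr_gt0 // ltr_wpDl.
pose ts := [seq c / (k.+1)%:R | k <- iota 0 (size p)].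
have : ~~ all (root p) ts.
  apply/negP => H.
  suff U : uniq ts by have := max_poly_roots pn0 H U; rewrite size_map size_iota ltnn.
  rewrite map_inj_uniq ?iota_uniq // => k l /eqP.
  rewrite eqr_div ?pnatr_eq0 // (inj_eq (mulfI (lt0r_neq0 c0))) eqr_nat.
  by move=> /eqP [].
case/allPn => t /mapP [k _ ->] nr.
exists (Q + (c / (k.+1)%:R) *: (Q0 - Q)); split; last by rewrite /= Hp.
apply: eO; rewrite -ball_normE /ball_ /= opprD addrA subrr add0r normrN normrZ.
have ck : 0 < c / (k.+1)%:R by rewrite divr_gt0.
rewrite gtr0_norm //.
apply: (@le_lt_trans _ _ (c * `|Q0 - Q|)).
  apply: ler_wpM2r => //; rewrite ler_pdivrMr ?ltr0Sn // ler_peMr ?(ltW c0) //.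
  by rewrite ler1n.
rewrite /c mulrAC ltr_pdivrMr ?ltr_wpDl // ltr_pM2l // ltrDl //.
Qed.

Lemma od_family (I : finType) (fam : I -> MT -> R) :
  (forall i, good (fam i) /\ exists Q0, fam i Q0 != 0) ->
  open [set Q | forall i, fam i Q != 0] /\ dense [set Q | forall i, fam i Q != 0].
Proof.
move=> H.
suff : forall s : seq I, open [set Q | forall i, i \in s -> fam i Q != 0] /\
                          dense [set Q | forall i, i \in s -> fam i Q != 0].
  move=> /(_ (enum I)).
  have -> : [set Q | forall i, i \in enum I -> fam i Q != 0] =
            [set Q | forall i, fam i Q != 0].
    by apply/seteqP; split => Q /= HQ i; [apply: HQ; rewrite mem_enum | move=> _; apply: HQ].
  by [].
elim => [|i s [os ds]].
  have -> : [set Q | forall i, i \in [::] -> fam i Q != 0] = setT.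
    by apply/seteqP; split => Q //= _ i.
  split; first exact: openT.
  by move=> O O0 _; rewrite setIT.
have -> : [set Q | forall j, j \in i :: s -> fam j Q != 0] =
   [set Q | fam i Q != 0] `&` [set Q | forall j, j \in s -> fam j Q != 0].
  apply/seteqP; split => Q /=.
    by move=> HQ; split; [apply: HQ; rewrite inE eqxx | move=> j js; apply: HQ; rewrite inE js orbT].
  by move=> [H1 H2] j; rewrite inE => /orP [/eqP -> // | /H2].
have [[ci li] wi] := H i.
split; first by apply: openI => //; exact: open_nz.
by apply: denseI => //; [exact: open_nz | exact: dense_nz].
Qed.

Lemma good_ext (f g : MT -> R) : (forall Q, f Q = g Q) -> good f -> good g.
Proof. by move=> fg; have -> : f = g by apply: funext. Qed.

Lemma good_cst (c : R) : good (fun _ => c).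
Proof.
split; first exact: cst_continuous.
by move=> A B; exists c%:P => t; rewrite hornerC.
Qed.

Lemma good_coord i j : good (fun Q : MT => Q i j).
Proof.
split; first exact: coord_continuous.
move=> A B; exists ((A i j)%:P + (B i j)%:P * 'X) => t.
by rewrite !mxE hornerD hornerM hornerX !hornerC mulrC.
Qed.

Lemma good_add f g : good f -> good g -> good (fun Q => f Q + g Q).
Proof.
move=> [cf lf] [cg lg]; split.
  by move=> x; apply: continuousD; [apply: cf | apply: cg].
move=> A B; have [p Hp] := lf A B; have [q Hq] := lg A B.
by exists (p + q) => t; rewrite Hp Hq hornerD.
Qed.

Lemma good_mul f g : good f -> good g -> good (fun Q => f Q * g Q).
Proof.
move=> [cf lf] [cg lg]; split.
  by move=> x; apply: continuousM; [apply: cf | apply: cg].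
move=> A B; have [p Hp] := lf A B; have [q Hq] := lg A B.
by exists (p * q) => t; rewrite Hp Hq hornerM.
Qed.

Lemma good_opp f : good f -> good (fun Q => - f Q).
Proof.
move=> gf; apply: (good_ext _ (good_mul (good_cst (-1)) gf)) => Q.
by rewrite mulN1r.
Qed.

Lemma good_sub f g : good f -> good g -> good (fun Q => f Q - g Q).
Proof. by move=> gf gg; apply: good_add => //; apply: good_opp. Qed.

Lemma good_sum (I : Type) (r : seq I) (P : pred I) (F : I -> MT -> R) :
  (forall i, good (F i)) -> good (fun Q => \sum_(i <- r | P i) F i Q).
Proof.
move=> gF; elim: r => [|a r IH].
  by apply: (good_ext _ (good_cst 0)) => Q; rewrite big_nil.
case Pa : (P a).
  by apply: (good_ext _ (good_add (gF a) IH)) => Q; rewrite big_cons Pa.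
by apply: (good_ext _ IH) => Q; rewrite big_cons Pa.
Qed.

Lemma good_prod (I : Type) (r : seq I) (P : pred I) (F : I -> MT -> R) :
  (forall i, good (F i)) -> good (fun Q => \prod_(i <- r | P i) F i Q).
Proof.
move=> gF; elim: r => [|a r IH].
  by apply: (good_ext _ (good_cst 1)) => Q; rewrite big_nil.
case Pa : (P a).
  by apply: (good_ext _ (good_mul (gF a) IH)) => Q; rewrite big_cons Pa.
by apply: (good_ext _ IH) => Q; rewrite big_cons Pa.
Qed.

Lemma good_det k (M : MT -> 'M[R]_k) :
  (forall i j, good (fun Q => M Q i j)) -> good (fun Q => \det (M Q)).
Proof.
move=> gM; rewrite /determinant.
apply: good_sum => s; apply: good_mul; first exact: good_cst.
by apply: good_prod => i; apply: gM.
Qed.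

Lemma good_exp f m : good f -> good (fun Q => f Q ^+ m).
Proof.
move=> gf; elim: m => [|m IH]; first by apply: (good_ext _ (good_cst 1)) => Q.
by apply: (good_ext _ (good_mul gf IH)) => Q; rewrite exprS.
Qed.

End Topo.

Section PG.
Local Close Scope classical_set_scope.

Section Graph.
Variables (R : realType) (n : nat) (E : finType).
Variables (src tgt : E -> 'I_n) (phi : E -> R).
Hypothesis hst : forall e, src e != tgt e.

Local Notation adj := (adj src tgt).
Local Notation joins := (joins src tgt).
Local Notation ogain := (ogain src tgt phi).
Local Notation balanced := (balanced src tgt phi).
Local Notation is_circle := (is_circle src tgt).

Definition potential (S : {set E}) (F : 'I_n -> R) :=
  forall e, e \in S -> phi e = F (src e) - F (tgt e).

Lemma joins_sym e i j : joins e i j = joins e j i.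
Proof. by rewrite /Defs.joins orbC. Qed.

Lemma adj_sym S : symmetric (adj S).
Proof.
move=> i j; rewrite /Defs.adj; apply/existsP/existsP => -[e He]; exists e;
  by rewrite joins_sym.
Qed.

Lemma csym S : connect_sym (adj S).
Proof. exact: sym_connect_sym (adj_sym S). Qed.

Lemma ogain_pot e i j (F : 'I_n -> R) : joins e i j ->
  phi e = F (src e) - F (tgt e) -> ogain e i j = F i - F j.
Proof.
rewrite /Defs.joins /Defs.ogain => /orP [/andP [/eqP si /eqP tj] | /andP [/eqP sj /eqP ti]] ->.
  by rewrite si tj !eqxx.
case: ifP => [/andP [/eqP a /eqP b]|_]; last by rewrite sj ti opprB.
by move: (hst e); rewrite a ti eqxx.
Qed.

Lemma sum_tele k (g : 'I_k.+1 -> R) :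
  \sum_(t < k.+1) (g t - g (ordS t)) = 0.
Proof.
rewrite sumrB (reindex_inj (@ordS_inj k.+1)) /=.
by rewrite subrr.
Qed.

Lemma pot_balanced S F : potential S F -> balanced S.
Proof.
move=> pF k vs es [_ _ eS ej].
rewrite (eq_bigr (fun t => F (vs t) - F (vs (ordS t)))).
  by rewrite (sum_tele (fun t => F (vs t))).
by move=> t _; apply: ogain_pot => //; apply: pF.
Qed.

Lemma balanced_sub (S S' : {set E}) : S' \subset S -> balanced S -> balanced S'.
Proof.
move=> hsub bS k vs es [iv ie eS ej]; apply: bS; split => // t.
by move/fintype.subsetP: hsub; apply; apply: eS.
Qed.


Lemma joins_inv e a b c d : joins e a b -> joins e c d ->
  (a = c /\ b = d) \/ (a = d /\ b = c).
Proof.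
rewrite /Defs.joins => /orP [/andP [/eqP <- /eqP <-]|/andP [/eqP <- /eqP <-]]
  /orP [/andP [/eqP <- /eqP <-]|/andP [/eqP <- /eqP <-]]; by [left|right].
Qed.

Lemma circle_pot (S' : {set E}) e (F : 'I_n -> R) (p : seq 'I_n) :
  path (adj S') (tgt e) p -> uniq (tgt e :: p) -> last (tgt e) p = src e ->
  e \notin S' -> potential S' F -> balanced (e |: S') ->
  phi e = F (src e) - F (tgt e).
Proof.
move=> pp up lp eS' pF bS.
set k := size p.
pose vsn (t : nat) := nth (tgt e) (tgt e :: p) t.
pose ed (a b : 'I_n) := odflt e [pick e' | (e' \in S') && joins e' a b].
have edP a b : adj S' a b -> (ed a b \in S') && joins (ed a b) a b.
  rewrite /ed; case: pickP => [x Hx //| H0] /existsP [x Hx].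
  by rewrite H0 in Hx.
have adjt t : (t < k)%N -> adj S' (vsn t) (vsn t.+1).
  by move=> tk; move/(pathP (tgt e)): pp => /(_ t tk).
pose vs (t : 'I_k.+1) := vsn t.
pose es (t : 'I_k.+1) := if (t < k)%N then ed (vsn t) (vsn t.+1) else e.
have vsS (t : 'I_k.+1) : vs (ordS t) = vsn (if (t < k)%N then t.+1 else 0%N).
  rewrite /vs /ordS /=; case: ifP => tk.
    by rewrite modn_small.
  have -> : val t = k by apply/eqP; rewrite eqn_leq -ltnS ltn_ord leqNgt tk.
  by rewrite modnn.
have vsk : vsn k = src e by rewrite /vsn -lp -(last_cons (tgt e) (tgt e)) -nth_last.
have ivn a b : (a < k.+1)%N -> (b < k.+1)%N -> vsn a = vsn b -> a = b.
  move=> ha hb /eqP; rewrite /vsn nth_uniq //=.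
  by move/eqP.
have circ : is_circle (e |: S') vs es.
  split.
  - by move=> a b /ivn H; apply/val_inj/H.
  - move=> a b; rewrite /es.
    case: ifP => ak; case: ifP => bk.
    + move=> Hab.
      have /andP [_ ja] := edP _ _ (adjt _ ak).
      have /andP [_ jb] := edP _ _ (adjt _ bk).
      rewrite Hab in ja.
      case: (joins_inv ja jb) => [[/ivn H _]|[/ivn H1 /ivn H2]].
      * by apply/val_inj/H.
      * have Ha := H1 (ltn_ord a) bk.
        have Hb := H2 ak (ltn_ord b).
        by lia.
    + move=> H; have /andP [H1 _] := edP _ _ (adjt _ ak).
      by move: H1; rewrite H (negbTE eS').
    + move=> H; have /andP [H1 _] := edP _ _ (adjt _ bk).
      by move: H1; rewrite -H (negbTE eS').
    + move=> _; apply/val_inj; have := ltn_ord a; have := ltn_ord b.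
      move: ak bk; rewrite /= => ak bk; lia.
  - move=> t; rewrite /es in_setU1; case: ifP => tk; last by rewrite eqxx.
    by have /andP [-> _] := edP _ _ (adjt _ tk); rewrite orbT.
  - move=> t; rewrite vsS /es /vs; case: ifP => tk.
      by have /andP [_ ->] := edP _ _ (adjt _ tk).
    have -> : val t = k by apply/eqP; rewrite eqn_leq -ltnS ltn_ord leqNgt tk.
    by rewrite vsk /Defs.joins !eqxx.
have := bS _ _ _ circ.
rewrite (eq_bigr (fun t => (F (vs t) - F (vs (ordS t))) +
   (if (t < k)%N then 0 else phi e - (F (src e) - F (tgt e))))); last first.
  move=> t _; rewrite vsS /es /vs; case: ifP => tk.
    have /andP [H1 H2] := edP _ _ (adjt _ tk).
    by rewrite addr0; apply: ogain_pot => //; apply: pF.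
  have -> : val t = k by apply/eqP; rewrite eqn_leq -ltnS ltn_ord leqNgt tk.
  rewrite vsk /= /Defs.ogain !eqxx /=.
  by rewrite addrCA subrr addr0.
rewrite big_split /= (sum_tele (fun t => F (vs t))) add0r big_ord_recr /=.
rewrite ltnn big1 ?add0r; last by move=> t _; rewrite /= ltn_ord.
by move/eqP; rewrite subr_eq0 => /eqP.
Qed.


Lemma adj_edge (S : {set E}) e : e \in S -> adj S (src e) (tgt e).
Proof. by move=> eS; apply/existsP; exists e; rewrite eS /Defs.joins !eqxx. Qed.

Lemma pot_exists S : balanced S -> exists F, potential S F.
Proof.
suff H : forall k (S : {set E}), (#|S| <= k)%N -> balanced S -> exists F, potential S F.
  by apply: (H #|S|).
elim => [|k IH] {}S.
  rewrite leqn0 cards_eq0 => /eqP -> _; exists (fun=> 0) => e; by rewrite inE.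
move=> cS bS.
case: (set_0Vmem S) => [-> | [e eS]]; first by exists (fun=> 0) => e; rewrite inE.
set S' := S :\ e.
have cS' : (#|S'| <= k)%N by move: cS; rewrite (cardsD1 e S) eS add1n ltnS.
have bS' : balanced S' by apply: balanced_sub bS; exact: subsetDl.
have [F' pF'] := IH S' cS' bS'.
have eS' : e \notin S' by rewrite !inE eqxx.
have SE : S = e |: S' by rewrite finset.setD1K.
case: (boolP (connect (adj S') (tgt e) (src e))) => [/connectP [p pp lp] | nc].
  exists F' => e0; rewrite SE in_setU1 => /orP [/eqP -> | /pF' //].
  move: lp; case: (shortenP pp) => p' pp' up' _ lp'.
  by apply: (circle_pot pp' up' (esym lp') eS' pF'); rewrite -SE.
pose c := F' (src e) - F' (tgt e) - phi e.
exists (fun i => F' i + (if connect (adj S') (tgt e) i then c else 0)).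
move=> e0; rewrite SE in_setU1 => /orP [/eqP -> | e0S].
  by rewrite (negbTE nc) connect0 /c; ring.
rewrite (same_connect1r (csym S') (@adj_edge S' e0 e0S) (tgt e)) (pF' _ e0S).
by case: ifP => _; ring.
Qed.


Definition NR (S : {set E}) : {set 'I_n} := [set i | fingraph.root (adj S) i != i].

Lemma ncomp_NR S : (n - ncomp src tgt S)%N = #|NR S|.
Proof.
set f := fun i => [set j | connect (adj S) i j].
set RT := [set i | fingraph.root (adj S) i == i].
have cs := csym S.
have H1 : components src tgt S = f @: RT.
  apply/setP => X; apply/imsetP/imsetP => [[i _ ->]|[i _ ->]]; last by exists i.
  exists (fingraph.root (adj S) i); first by rewrite inE root_root.
  apply/setP => j; rewrite !inE; apply: same_connect => //.
  exact: connect_root.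
have H2 : #|f @: RT| = #|RT|.
  apply: card_in_imset => r r'; rewrite !inE => /eqP hr /eqP hr' hf.
  have : r' \in f r by rewrite hf inE connect0.
  by rewrite inE => /(fingraph.rootP cs); rewrite hr hr'.
rewrite /ncomp H1 H2.
have -> : NR S = ~: RT by apply/setP => i; rewrite !inE.
have H := cardsC RT; rewrite card_ord in H; move: H; move: #|RT| #|~: RT| => a b H; lia.
Qed.

End Graph.


Section Main.
Variables (R : realType) (n d' : nat) (E : finType).
Variables (src tgt : E -> 'I_n) (phi : E -> R).
Hypothesis hst : forall e, src e != tgt e.
Variable i0 : 'I_n.
Local Notation d := d'.+1.
Local Notation MT := 'M[R]_(n, d).
Local Notation adj := (adj src tgt).
Local Notation balanced := (balanced src tgt phi).
Local Notation flatI := (flatI src tgt phi).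
Local Notation NR := (NR src tgt).
Local Notation potential := (potential src tgt phi).
Local Notation groot := fingraph.root.

Definition zz (Q : MT) i := \sum_(l < d) Q i l ^+ 2.
Definition vS S (k : nat) : 'I_n := nth i0 (enum (NR S)) k.
Definition rS S k := groot (adj S) (vS S k).
Definition mS S := #|NR S|.
Definition FS S : 'I_n -> R :=
  match pselect (exists F, potential S F) with
  | left H => projT1 (cid H) | right _ => fun=> 0 end.

Lemma FS_pot S : balanced S -> potential S (FS S).
Proof.
move=> bS; rewrite /FS; case: pselect => [H|]; first exact: projT2 (cid H).
by move/(_ (pot_exists hst bS)).
Qed.

Definition bv (Q : MT) S k :=
  (zz Q (vS S k) - FS S (vS S k)) - (zz Q (rS S k) - FS S (rS S k)).
Definition Am (Q : MT) S : 'M[R]_(d, mS S) :=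
  \matrix_(l, k) (2 * (Q (vS S k) l - Q (rS S k) l)).
Definition brow (Q : MT) S : 'rV[R]_(mS S) := \row_k bv Q S k.

Lemma sqdist_row (P : 'rV[R]_d) (Q : MT) i :
  sqdist P (row i Q) = \sum_(l < d) (P 0 l - Q i l) ^+ 2.
Proof. by apply: eq_bigr => l _; rewrite mxE. Qed.

Lemma key_id (P : 'rV[R]_d) (Q : MT) S (k : 'I_(mS S)) :
  (sqdist P (row (vS S k) Q) - FS S (vS S k)) -
  (sqdist P (row (rS S k) Q) - FS S (rS S k)) =
  bv Q S k - (P *m Am Q S) 0 k.
Proof.
rewrite !sqdist_row /bv /zz !mxE.
have key : \sum_(l < d) (P 0 l - Q (vS S k) l) ^+ 2 -
           \sum_(l < d) (P 0 l - Q (rS S k) l) ^+ 2 =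
   (\sum_(l < d) Q (vS S k) l ^+ 2 - \sum_(l < d) Q (rS S k) l ^+ 2) -
   \sum_(l < d) P 0 l * (Am Q S) l k.
  rewrite -!sumrB; apply: eq_bigr => l _; rewrite mxE; ring.
lra.
Qed.

Lemma in_NR S i : i \in NR S -> i = vS S (index i (enum (NR S))) /\
   (index i (enum (NR S)) < mS S)%N.
Proof.
move=> iN; rewrite /vS nth_index ?mem_enum //; split => //.
by rewrite /mS cardE index_mem mem_enum.
Qed.

Lemma vS_NR S (k : nat) : (k < mS S)%N -> vS S k \in NR S.
Proof. by move=> km; rewrite /vS -(mem_enum (NR S)) mem_nth // -cardE. Qed.

Lemma flat_char (Q : MT) S : balanced S -> forall P,
  flatI Q S P <-> P *m Am Q S = brow Q S.
Proof.
move=> bS P; have pF := FS_pot bS; set F := FS S.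
set h := fun i => sqdist P (row i Q) - F i.
have cs := csym src tgt S.
have step1 : flatI Q S P <-> forall e, e \in S -> h (src e) = h (tgt e).
  split => H e eS; have := H e eS; have := pF e eS; rewrite /h /F /hyp /pyth /=; lra.
have step2 : (forall e, e \in S -> h (src e) = h (tgt e)) <->
             (forall i, h i = h (groot (adj S) i)).
  split => H.
    move=> i; have hc : closed_mem (adj S) (mem [pred j | h j == h i]).
      move=> x y /existsP [e /andP [eS je]] /=.
      move: je; rewrite /Defs.joins => /orP [/andP [/eqP <- /eqP <-]|/andP [/eqP <- /eqP <-]];
        by rewrite !inE (H e eS).
    have := closed_connect hc (connect_root (adj S) i).
    by rewrite !inE eqxx => /esym /eqP.
  move=> e eS; rewrite H [in RHS]H.
  by congr h; apply/(fingraph.rootP cs)/connect1/adj_edge.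
have step3 : (forall i, h i = h (groot (adj S) i)) <->
             (forall k : 'I_(mS S), h (vS S k) = h (rS S k)).
  split => H; first by move=> k; apply: H.
  move=> i; case: (boolP (i \in NR S)) => [iN | ].
    by have [E1 ik] := in_NR iN; have := H (Ordinal ik); rewrite /rS /= -E1.
  by rewrite inE negbK => /eqP ->.
rewrite step1 step2 step3; split => H.
  apply/rowP => k; have := H k; rewrite /h /F => Hk.
  rewrite [brow Q S 0 k]mxE; have := key_id P Q k; rewrite Hk subrr.
  by move/eqP; rewrite eq_sym subr_eq0 eq_sym => /eqP.
move=> k; apply/eqP; rewrite -subr_eq0; apply/eqP.
by rewrite /h /F key_id H mxE subrr.
Qed.


Definition A2 (Q : MT) S : 'M[R]_(mS S) :=
  rowsub (fun l : 'I_(mS S) => inord l : 'I_d) (Am Q S).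

Definition Mb (Q : MT) S : 'M[R]_(d.+1) :=
  \matrix_(l, k) (if (l < d)%N then 2 * (Q (vS S k) (inord l) - Q (rS S k) (inord l))
                  else - bv Q S k).

Lemma flat_affine (Q : MT) S : balanced S -> (mS S <= d)%N ->
  \det (A2 Q S) != 0 -> affine_flat (flatI Q S) (d - mS S).
Proof.
move=> bS md dA.
have rA : \rank (Am Q S) = mS S.
  apply/eqP; rewrite eqn_leq rank_leq_col /=.
  have H2 : \rank (A2 Q S) = mS S by apply: mxrank_unit; rewrite unitmxE unitfE.
  have := mxrankS (rowsub_sub (fun l : 'I_(mS S) => inord l : 'I_d) (Am Q S)).
  by rewrite -/(A2 Q S) H2.
have fA : row_full (Am Q S) by rewrite /row_full rA.
have /submxP [P0 HP0] := submx_full (brow Q S) fA.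
exists P0, (kermx (Am Q S)); split; first by rewrite mxrank_ker rA.
apply/seteqP; split => P /=.
  move/(flat_char Q bS) => HP.
  by rewrite sub_kermx mulmxBl HP HP0 subrr.
rewrite sub_kermx mulmxBl subr_eq0 => /eqP H.
by apply/(flat_char Q bS); rewrite H -HP0.
Qed.

Lemma flat_empty_big (Q : MT) S : balanced S -> (d < mS S)%N ->
  \det (Mb Q S) != 0 -> flatI Q S = set0.
Proof.
move=> bS md dM; apply/seteqP; split => P //= /(flat_char Q bS) HP.
have rf : row_free (Mb Q S) by rewrite row_free_unit unitmxE unitfE.
pose x : 'rV[R]_(d.+1) := \row_l (if (l < d)%N then P 0 (inord l) else 1).
have x0 : x *m Mb Q S = 0 *m Mb Q S.
  rewrite mul0mx; apply/rowP => k; rewrite !mxE big_ord_recr /= !mxE ltnn mul1r.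
  have kk : (k < mS S)%N by apply: leq_ltn_trans md; rewrite -ltnS.
  have := congr1 (fun M : 'rV[R]_(mS S) => M 0 (Ordinal kk)) HP; rewrite !mxE /= => <-.
  apply/eqP; rewrite subr_eq0; apply/eqP.
  apply: eq_bigr => l _; rewrite /x !mxE /= ltn_ord /=.
  have -> : (inord l : 'I_d) = l by apply/val_inj; rewrite /= inordK.
  by [].
have := congr1 (fun v : 'rV[R]_(d.+1) => v 0 ord_max) (row_free_inj rf x0).
by rewrite !mxE ltnn => /eqP; rewrite oner_eq0.
Qed.

Lemma flat_unbal (Q : MT) S : ~ balanced S -> flatI Q S = set0.
Proof.
move=> nb; apply/seteqP; split => P //= HP; apply: nb.
apply: (@pot_balanced _ _ _ src tgt phi hst S (fun i => sqdist P (row i Q))).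
by move=> e eS; rewrite -(HP e eS).
Qed.


Definition cf S (Q : MT) :=
  if (mS S <= d)%N then \det (A2 Q S) else \det (Mb Q S).

Lemma good_zz i : good (fun Q : MT => zz Q i).
Proof. by apply: good_sum => l; apply: good_exp; apply: good_coord. Qed.

Lemma good_diff2 a b l : good (fun Q : MT => 2 * (Q a l - Q b l)).
Proof. by apply: good_mul; [apply: good_cst | apply: good_sub; apply: good_coord]. Qed.

Lemma good_cf S : good (cf S).
Proof.
rewrite /cf; case: (mS S <= d)%N; apply: good_det => i j.
  by apply: (good_ext _ (good_diff2 (vS S j) (rS S j) (inord i))) => Q; rewrite !mxE.
case: (ltnP i d) => id.
  by apply: (good_ext _ (good_diff2 (vS S j) (rS S j) (inord i))) => Q; rewrite !mxE id.
apply: (good_ext (f := fun Q => - bv Q S j)); first by move=> Q; rewrite !mxE ltnNge id.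
apply: good_opp; apply: good_sub; apply: good_sub; try apply: good_zz; apply: good_cst.
Qed.

Lemma rS_notNR S k : rS S k \notin NR S.
Proof. by rewrite inE negbK fingraph.root_root //; apply: csym. Qed.

Lemma idx_vS S k : (k < mS S)%N -> index (vS S k) (enum (NR S)) = k.
Proof. by move=> km; apply: index_uniq; [rewrite -cardE | apply: enum_uniq]. Qed.

Lemma sum_delta (v : 'I_d -> R) (a : nat) : (a < d)%N ->
  \sum_(l < d) v l * (a == l)%:R = v (inord a).
Proof.
move=> ad; rewrite (bigD1 (inord a)) //= big1 ?addr0.
  by rewrite inordK // eqxx mulr1.
move=> l /negbTE H; case: eqP => [al|]; last by rewrite mulr0.
by move: H; rewrite al inord_val eqxx.
Qed.


Lemma wit_small S : (mS S <= d)%N -> exists Q0, cf S Q0 != 0.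
Proof.
move=> md.
pose Q0 : MT := \matrix_(i, l) (if (i \in NR S) && (index i (enum (NR S)) == l)
                                then 1 else 0).
exists Q0; rewrite /cf md.
have -> : A2 Q0 S = (2 : R)%:M.
  apply/matrixP => l k; rewrite !mxE vS_NR // idx_vS // (negbTE (rS_notNR S k)) /=.
  rewrite inordK; last by apply: leq_trans md.
  rewrite subr0; case: (l =P k) => [->|lk]; first by rewrite eqxx mulr1.
  by rewrite ifF ?mulr0 //; apply/eqP => kl; apply: lk; apply/val_inj.
rewrite (@det_scalar _ (mS S) 2) expf_neq0 // pnatr_eq0.
Qed.


Lemma wit_big S : (d < mS S)%N -> exists Q0, cf S Q0 != 0.
Proof.
move=> md.
pose dl (k : nat) := FS S (vS S k) - FS S (rS S k).
pose t : R := if dl 0%N + dl d == 2 then 2 else 1.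
have t0 : t != 0 by rewrite /t; case: ifP => _; rewrite ?pnatr_eq0 ?oner_eq0.
have tt : 2 * t ^+ 2 - (dl 0%N + dl d) != 0.
  rewrite /t; case: ifP => [/eqP ->|/negbT H]; first by apply/eqP; lra.
  by rewrite expr1n mulr1 subr_eq0 eq_sym.
pose c (k : nat) (l : 'I_d) : R :=
  if (k < d)%N then (k == l)%:R else if k == d then - (0%N == l)%:R else 0.
pose Q0 : MT := \matrix_(i, l) (if i \in NR S then t * c (index i (enum (NR S))) l else 0).
have Qv k l : (k < mS S)%N -> Q0 (vS S k) l = t * c k l.
  by move=> km; rewrite mxE vS_NR // idx_vS.
have Qr k l : Q0 (rS S k) l = 0 by rewrite mxE (negbTE (rS_notNR S k)).
have zv k : (k <= d)%N -> zz Q0 (vS S k) = t ^+ 2.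
  move=> kd; have km : (k < mS S)%N by apply: leq_ltn_trans md.
  rewrite /zz (eq_bigr (fun l : 'I_d => t ^+ 2 * ((if (k < d)%N then k else 0%N) == l)%:R)).
    rewrite (sum_delta (fun=> t ^+ 2)) //; by case: ifP.
  move=> l _; rewrite Qv // /c; case: ifP => kd'.
    by rewrite exprMn; case: (k == l); rewrite ?expr1n ?expr0n.
  have -> : k = d by apply/eqP; rewrite eqn_leq kd leqNgt kd'.
  rewrite eqxx; case Hl : (0%N == l); rewrite /= ?mulr0n ?mulr1n; ring.
have zr k : zz Q0 (rS S k) = 0 by rewrite /zz big1 // => l _; rewrite Qr expr0n.
exists Q0; rewrite /cf leqNgt md /=.
rewrite -unitfE -unitmxE -row_free_unit; apply: inj_row_free => v Hv.
have eqk (k : 'I_d.+1) : 2 * t * (\sum_(l < d) v 0 (widen_ord (leqnSn d) l) * c k l)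
     - v 0 ord_max * (t ^+ 2 - dl k) = 0.
  have := congr1 (fun M : 'rV[R]_(d.+1) => M 0 k) Hv.
  rewrite !mxE big_ord_recr /= !mxE ltnn /bv zv -1?ltnS // zr.
  move=> H; rewrite -[in RHS]H mulr_sumr; congr (_ + _); last by rewrite /dl; ring.
  have km : (k < mS S)%N by apply: leq_ltn_trans md; rewrite -ltnS.
  apply: eq_bigr => l _; rewrite !mxE /= ltn_ord vS_NR // idx_vS // (negbTE (rS_notNR S k)).
  have -> : (inord l : 'I_d) = l by apply/val_inj; rewrite /= inordK.
  ring.
pose w (l : 'I_d) := v 0 (widen_ord (leqnSn d) l).
have es (a : 'I_d) : 2 * t * w a - v 0 ord_max * (t ^+ 2 - dl a) = 0.
  have := eqk (widen_ord (leqnSn d) a); rewrite /= /c ltn_ord.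
  by rewrite (sum_delta (fun l => v 0 (widen_ord (leqnSn d) l))) // inord_val.
have el : - (2 * t * w (inord 0)) - v 0 ord_max * (t ^+ 2 - dl d) = 0.
  have := eqk ord_max; rewrite /= /c ltnn eqxx.
  under eq_bigr do rewrite mulrN.
  by rewrite sumrN (sum_delta (fun l => v 0 (widen_ord (leqnSn d) l))) // mulrN.
have e0 := es (inord 0); rewrite inordK // in e0.
have vd : v 0 ord_max = 0.
  have : v 0 ord_max * (2 * t ^+ 2 - (dl 0%N + dl d)) = 0.
    by apply/eqP; rewrite -(subr_eq0 _ 0); apply/eqP; move: e0 el; lra.
  by move/eqP; rewrite mulf_eq0 (negbTE tt) orbF => /eqP.
have wa a : w a = 0.
  have := es a; rewrite vd mul0r subr0 => /eqP.
  by rewrite !mulf_eq0 (negbTE t0) pnatr_eq0 /= => /eqP.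
apply/rowP => j; rewrite mxE; case: (ltnP j d) => jd.
  have -> : j = widen_ord (leqnSn d) (Ordinal jd) by apply/val_inj.
  exact: (wa (Ordinal jd)).
have -> : j = ord_max by apply/val_inj/eqP; rewrite eqn_leq jd -ltnS ltn_ord.
exact: vd.
Qed.

End Main.


Lemma affine_uniq (R : realType) d (A : set 'rV[R]_d) k1 k2 :
  affine_flat A k1 -> affine_flat A k2 -> k1 = k2.
Proof.
move=> [P0 [U [rU EU]]] [P1 [V [rV EV]]].
suff H : forall (P0 P1 : 'rV[R]_d) (U V : 'M[R]_d), [set P | (P - P0 <= U)%MS]%classic = [set P | (P - P1 <= V)%MS]%classic ->
   (U <= V)%MS.
  have e : [set P | (P - P0 <= U)%MS]%classic = [set P | (P - P1 <= V)%MS]%classic by rewrite -EU -EV.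
  have h1 := H _ _ _ _ e; have h2 := H _ _ _ _ (esym e).
  by rewrite -rU -rV; apply/eqP; rewrite eqn_leq !mxrankS.
move=> Q0 Q1 U' V' e; apply/row_subP => i.
have h0 : (Q0 - Q1 <= V')%MS.
  have : [set P | (P - Q0 <= U')%MS]%classic Q0 by rewrite /= subrr sub0mx.
  by rewrite e.
have h1 : (Q0 + row i U' - Q1 <= V')%MS.
  have : [set P | (P - Q0 <= U')%MS]%classic (Q0 + row i U') by rewrite /= addrC addKr row_sub.
  by rewrite e.
have -> : row i U' = (Q0 + row i U' - Q1) + (-1) *: (Q0 - Q1) by rewrite scaleN1r opprB addrA subrK addrC addKr.
by apply: addmx_sub => //; apply: scalemx_sub.
Qed.

Section Comp.
Variables (n : nat) (E : finType) (src tgt : E -> 'I_n).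
Local Notation adj := (adj src tgt).
Local Notation groot := fingraph.root.
Local Notation NR := (NR src tgt).

Lemma adj_sub (S S' : {set E}) : S \subset S' -> subrel (adj S) (adj S').
Proof.
move=> sS i j /existsP [e /andP [eS je]]; apply/existsP; exists e.
by rewrite je andbT; move/fintype.subsetP: sS; apply.
Qed.

Lemma conn_sub (S S' : {set E}) : S \subset S' ->
  forall i j, connect (adj S) i j -> connect (adj S') i j.
Proof.
move=> sS; apply: connect_sub => i j H; apply: connect1; exact: adj_sub H.
Qed.

Lemma card_RT S : #|[set i | groot (adj S) i == i]| = (n - #|NR S|)%N.
Proof.
have -> : NR S = ~: [set i | groot (adj S) i == i] by apply/setP => i; rewrite !inE.
have H := cardsC [set i | groot (adj S) i == i]; rewrite card_ord in H.
by move: H; move: #|[set i | _]| #|~: _| => a b H; lia.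
Qed.

Lemma comp_eq (S S' : {set E}) : S \subset S' -> #|NR S| = #|NR S'| ->
  forall i j, connect (adj S') i j -> connect (adj S) i j.
Proof.
move=> sS mE i j cij.
have cs := csym src tgt S; have cs' := csym src tgt S'.
set RT := [set i | groot (adj S) i == i].
set RT' := [set i | groot (adj S') i == i].
pose g := fun x => groot (adj S') x.
have gx x : g (groot (adj S) x) = groot (adj S') x.
  apply/esym/(fingraph.rootP cs'); apply: conn_sub sS _ _ _; exact: connect_root.
have sub' : RT' \subset g @: RT.
  apply/fintype.subsetP => r; rewrite inE => /eqP rr; apply/imsetP.
  exists (groot (adj S) r); first by rewrite inE fingraph.root_root.
  by rewrite gx rr.
have inj : {in RT &, injective g}.
  apply/imset_injP; rewrite eqn_leq leq_imset_card /=.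
  by rewrite (leq_trans _ (subset_leq_card sub')) // /RT /RT' !card_RT mE.
have : groot (adj S) i = groot (adj S) j.
  apply: inj; rewrite ?inE ?fingraph.root_root //.
  by rewrite !gx; apply/(fingraph.rootP cs').
by move/(fingraph.rootP cs).
Qed.

Lemma comps_conn (S1 S2 : {set E}) : components src tgt S1 = components src tgt S2 ->
  forall i j, connect (adj S1) i j -> connect (adj S2) i j.
Proof.
move=> H i j cij.
have cs1 := csym src tgt S1; have cs2 := csym src tgt S2.
have : [set j | connect (adj S1) i j] \in components src tgt S2.
  by rewrite -H; apply/imsetP; exists i.
case/imsetP => k _ Hk.
have ki : connect (adj S2) k i.
  have : i \in [set j | connect (adj S1) i j] by rewrite inE connect0.
  by rewrite Hk inE.
have kj : connect (adj S2) k j.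
  have : j \in [set j | connect (adj S1) i j] by rewrite inE.
  by rewrite Hk inE.
by apply: connect_trans kj; rewrite cs2.
Qed.

Lemma conn_comps (S1 S2 : {set E}) :
  (forall i j, connect (adj S1) i j = connect (adj S2) i j) ->
  components src tgt S1 = components src tgt S2.
Proof.
move=> H; apply: eq_imset => i; apply/setP => j; by rewrite !inE H.
Qed.

Lemma ncomp_le S : (ncomp src tgt S <= n)%N.
Proof. by rewrite /ncomp /components (leq_trans (leq_imset_card _ _)) // card_ord. Qed.

End Comp.

Section Final.
Variables (R : realType) (n d' : nat) (E : finType).
Variables (src tgt : E -> 'I_n) (phi : E -> R).
Hypothesis hst : forall e, src e != tgt e.
Variable i0 : 'I_n.
Local Notation d := d'.+1.
Local Notation MT := 'M[R]_(n, d).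
Local Notation adj := (adj src tgt).
Local Notation balanced := (balanced src tgt phi).
Local Notation flatI := (flatI src tgt phi).
Local Notation NR := (NR src tgt).
Local Notation potential := (potential src tgt phi).
Local Notation cfL := (cf src tgt phi i0).

Lemma mS_ncomp S : mS src tgt S = (n - ncomp src tgt S)%N.
Proof. by rewrite /mS ncomp_NR. Qed.

Lemma partA (Q : MT) S : cfL S Q != 0 ->
  ((~ balanced S \/ (d < mS src tgt S)%N) -> flatI Q S = set0) /\
  ((balanced S /\ (mS src tgt S <= d)%N) -> affine_flat (flatI Q S) (d - mS src tgt S)).
Proof.
move=> cfQ; split.
  case => [nb | md]; first exact: flat_unbal.
  case: (pselect (balanced S)) => [bS|nb]; last exact: flat_unbal.
  apply: (flat_empty_big hst (i0:=i0) bS md); move: cfQ.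
  by rewrite /cf leqNgt md.
case => bS md; apply: (flat_affine hst (i0:=i0) bS md); move: cfQ.
by rewrite /cf md.
Qed.

Lemma flatU (Q : MT) S1 S2 : flatI Q (S1 :|: S2) = (flatI Q S1 `&` flatI Q S2)%classic.
Proof.
apply/seteqP; split => P /=.
  by move=> H; split => e eS; apply: H; rewrite inE eS ?orbT.
by move=> [H1 H2] e; rewrite inE => /orP [/H1|/H2].
Qed.

Lemma flat_conn (Q : MT) S F P : potential S F ->
  (flatI Q S P <-> forall i j, connect (adj S) i j ->
     sqdist P (row i Q) - F i = sqdist P (row j Q) - F j).
Proof.
move=> pF; set h := fun i => sqdist P (row i Q) - F i.
have cs := csym src tgt S.
have step1 : flatI Q S P <-> forall e, e \in S -> h (src e) = h (tgt e).
  split => H e eS; have := H e eS; have := pF e eS; rewrite /h /hyp /pyth /=; lra.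
rewrite step1; split => H.
  move=> i j cij; have hc : closed_mem (adj S) (mem [pred k | h k == h i]).
    move=> x y /existsP [e /andP [eS je]] /=.
    move: je; rewrite /Defs.joins => /orP [/andP [/eqP <- /eqP <-]|/andP [/eqP <- /eqP <-]];
    by rewrite !inE (H e eS).
  have := closed_connect hc cij.
  by rewrite !inE eqxx => /esym /eqP /esym.
by move=> e eS; apply: H; apply: connect1; apply: adj_edge.
Qed.

Lemma small_of (Q : MT) S P : (forall S, cfL S Q != 0) -> balanced S -> flatI Q S P ->
  (mS src tgt S <= d)%N.
Proof.
move=> hcf bS HP; rewrite leqNgt; apply/negP => md.
have := (partA (hcf S)).1 (or_intror md).
by move/seteqP => [/(_ P HP)].
Qed.

Lemma partB (Q : MT) S1 S2 : (forall S, cfL S Q != 0) ->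
  (flatI Q S1 = flatI Q S2 /\ (flatI Q S1 !=set0)%classic) <->
  [/\ balanced (S1 :|: S2), components src tgt S1 = components src tgt S2 &
      (n - d <= ncomp src tgt S1)%N].
Proof.
move=> hcf; split.
  move=> [e12 [P HP]].
  set S3 := S1 :|: S2.
  have e3 : flatI Q S3 = flatI Q S1 by rewrite flatU -e12 setIid.
  have HP3 : flatI Q S3 P by rewrite e3.
  have HP2 : flatI Q S2 P by rewrite -e12.
  have bS3 : balanced S3.
    case: (pselect (balanced S3)) => // nb.
    by move: HP3; rewrite (flat_unbal hst Q nb).
  have bS1 : balanced S1 by apply: balanced_sub bS3; apply: finset.subsetUl.
  have bS2 : balanced S2 by apply: balanced_sub bS3; apply: finset.subsetUr.
  have m1 := small_of hcf bS1 HP.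
  have m2 := small_of hcf bS2 HP2.
  have m3 := small_of hcf bS3 HP3.
  have a1 := (partA (hcf S1)).2 (conj bS1 m1).
  have a2 := (partA (hcf S2)).2 (conj bS2 m2).
  have a3 := (partA (hcf S3)).2 (conj bS3 m3).
  rewrite e3 in a3; rewrite -e12 in a2.
  have q13 := affine_uniq a1 a3; have q12 := affine_uniq a1 a2.
  have E13 : #|NR S1| = #|NR S3| by rewrite /mS in m1 m3 q13 *; lia.
  have E23 : #|NR S2| = #|NR S3| by rewrite /mS in m1 m2 m3 q13 q12 *; lia.
  have c13 := comp_eq (finset.subsetUl S1 S2) E13.
  have c23 := comp_eq (finset.subsetUr S1 S2) E23.
  split => //.
    apply: conn_comps => i j; apply/idP/idP => H.
      by apply: c23; apply: conn_sub H; apply: finset.subsetUl.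
    by apply: c13; apply: conn_sub H; apply: finset.subsetUr.
  have := mS_ncomp S1; have := ncomp_le src tgt S1; rewrite /mS in m1 *; lia.
case=> bS3 ce nb.
have bS1 : balanced S1 by apply: balanced_sub bS3; apply: finset.subsetUl.
have bS2 : balanced S2 by apply: balanced_sub bS3; apply: finset.subsetUr.
have m1 : (mS src tgt S1 <= d)%N.
  have := mS_ncomp S1; have := ncomp_le src tgt S1; rewrite /mS in nb *; lia.
have [F pF] := pot_exists hst bS3.
have pF1 : potential S1 F by move=> e eS; apply: pF; rewrite inE eS.
have pF2 : potential S2 F by move=> e eS; apply: pF; rewrite inE eS orbT.
split.
  apply/seteqP; split => P.
    move/(flat_conn Q P pF1) => H; apply/(flat_conn Q P pF2) => i j cij.
    by apply: H; apply: (comps_conn (esym ce)).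
  move/(flat_conn Q P pF2) => H; apply/(flat_conn Q P pF1) => i j cij.
  by apply: H; apply: (comps_conn ce).
have [P0 [U [_ ->]]] := (partA (hcf S1)).2 (conj bS1 m1).
by exists P0; rewrite /= subrr sub0mx.
Qed.

End Final.

End PG.

Unset Implicit Arguments.
Theorem theorem5p1 (R : realType) (n d : nat) (E : finType)
    (src tgt : E -> 'I_n) (phi : E -> R)
    (hst : forall e, src e != tgt e)
    (hd : (0 < d)%N) (hdn : (d < n)%N) :
  exists G : set 'M[R]_(n, d),
    [/\ open G, dense G,
        (forall Q, G Q -> forall i j : 'I_n, i != j -> row i Q != row j Q) &
        forall Q, G Q ->
          (forall S : {set E},
              let m := (n - ncomp src tgt S)%N in
              ((~ balanced src tgt phi S \/ (d < m)%N) ->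
                 flatI src tgt phi Q S = set0) /\
              ((balanced src tgt phi S /\ (m <= d)%N) ->
                 affine_flat (flatI src tgt phi Q S) (d - m)))
          /\
          (forall S1 S2 : {set E},
              (flatI src tgt phi Q S1 = flatI src tgt phi Q S2 /\
               flatI src tgt phi Q S1 !=set0)
              <->
              [/\ balanced src tgt phi (S1 :|: S2),
                  components src tgt S1 = components src tgt S2 &
                  (n - d <= ncomp src tgt S1)%N])].
Proof.
case: d hd hdn => [//|d'] _ hdn.
have n0 : (0 < n)%N by apply: ltn_trans hdn.
pose i0 : 'I_n := Ordinal n0.
pose I := ({p : 'I_n * 'I_n | p.1 != p.2} + {set E})%type.
pose fam (k : I) : 'M[R]_(n, d'.+1) -> R :=
  match k with
  | inl p => fun Q => Q (sval p).1 ord0 - Q (sval p).2 ord0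
  | inr S0 => cf src tgt phi i0 S0
  end.
have famok : forall k, good (fam k) /\ exists Q0, fam k Q0 != 0.
  case => [[[i j] /= ij]|S]; rewrite /fam /=.
    split; first by apply: good_sub; apply: good_coord.
    exists (\matrix_(a, b) (a : nat)%:R); rewrite !mxE subr_eq0 eqr_nat.
    by apply: contra ij => /eqP H; apply/eqP/val_inj.
  split; first exact: good_cf.
  by case: (leqP (mS src tgt S) d'.+1) => md; [exact: wit_small | exact: wit_big].
have [oG dG] := od_family famok.
exists [set Q | forall k, fam k Q != 0]; split => //.
  move=> Q HQ i j ij; apply/negP => /eqP rij.
  have := HQ (inl (exist _ (i, j) ij)); rewrite /fam /=.
  have := congr1 (fun r : 'rV[R]_(d'.+1) => r 0 ord0) rij; rewrite !mxE => ->.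
  by rewrite subrr eqxx.
move=> Q HQ.
have hcf : forall S, cf src tgt phi i0 S Q != 0 by move=> S; apply: (HQ (inr S)).
split.
  move=> S m; rewrite /m -mS_ncomp.
  have H := partA hst (hcf S).
  exact: H.
by move=> S1 S2; apply: partB.
Qed.
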